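(* With the matrices defined in the context, let $\mathbf{A}=\mathbf{A_N}+\frac{2}{h^2}I_{2n(n-1)}$ and $S=\mathbf{B}\mathbf{A}^{-1}\mathbf{B}^T$. Then $$S^\dagger=S_N^\dagger+\frac{2}{h^2}(\mathbf{B}\mathbf{B}^T)^\dagger,$$ where $S_N=\mathbf{B}\mathbf{A_N}^{-1}\mathbf{B}^T$.
   Context: Fix an integer $n\ge 2$ and set $h=1/n$. Let $I_m$ denote the $m\times m$ identity matrix and $\otimes$ the Kronecker product. Let $\mathrm{B}\in\mathbb{R}^{n\times(n-1)}$ be $\mathrm{B}=\frac1h M$, where $M_{i,i}=1$ and $M_{i+1,i}=-1$ for $1\le i\le n-1$, all other entries $0$. Define $\mathrm{B}^u_x=I_n\otimes \mathrm{B}$, $\mathrm{B}^v_y=\mathrm{B}\otimes I_n$, $\mathrm{B}^q_x=I_{n-1}\otimes\mathrm{B}$, $\mathrm{B}^q_y=\mathrm{B}\otimes I_{n-1}$. Let $\mathbf{B}=\begin{bmatrix}-\mathrm{B}^u_x & -\mathrm{B}^v_y\end{bmatrix}\in\mathbb{R}^{n^2\times 2n(n-1)}$ and $\mathbf{C}=\begin{bmatrix}-(\mathrm{B}^q_y)^T & (\mathrm{B}^q_x)^T\end{bmatrix}\in\mathbb{R}^{(n-1)^2\times 2n(n-1)}$, and let $\mathbf{A_N}=\mathbf{B}^T\mathbf{B}+\mathbf{C}^T\mathbf{C}$ (invertible). The matrix $\mathbf{B}\mathbf{B}^T\in\mathbb{R}^{n^2\times n^2}$ is the pressure Laplacian with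 Neumann boundary conditions. The superscript $\dagger$ denotes the Moore–Penrose pseudoinverse. *)

(* Defs.v *)
From HB Require Import structures.
From mathcomp Require Import all_boot all_order all_algebra.
From mathcomp Require Import mxtens.
From Stdlib Require Import ClassicalEpsilon.
Set Implicit Arguments. Unset Strict Implicit. Unset Printing Implicit Defensive.
Import Order.TTheory GRing.Theory Num.Theory.
Local Open Scope ring_scope.

Definition is_pinv (R : realFieldType) (m k : nat) (A : 'M[R]_(m, k)) (X : 'M[R]_(k, m)) : Prop :=
  [/\ A *m X *m A = A, X *m A *m X = X, (A *m X)^T = A *m X & (X *m A)^T = X *m A].

(* The Moore--Penrose pseudoinverse A^dagger (the unique X with is_pinv A X;
   such an X always exists over a real field). *)
Definition pinv (R : realFieldType) (m k : nat) (A : 'M[R]_(m, k)) : 'M[R]_(k, m) :=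
  epsilon (inhabits 0) (is_pinv A).

(* The n x (n-1) matrix B = (1/h) M, h = 1/n: M_{i,i} = 1, M_{i+1,i} = -1 (0-based). *)
Definition Bmat (R : realFieldType) (n : nat) : 'M[R]_(n, n.-1) :=
  \matrix_(i < n, j < n.-1)
     ((n%:R : R) * (((val i == val j)%:R) - ((val i == (val j).+1)%:R))).

Section Mats.
Variables (R : realFieldType) (n : nat).
Local Notation B := (Bmat R n).

Definition Bux : 'M[R]_(n * n, n * n.-1) := (1%:M : 'M[R]_n) *t B.
Definition Bvy : 'M[R]_(n * n, n.-1 * n) := B *t (1%:M : 'M[R]_n).
Definition Bqx : 'M[R]_(n.-1 * n, n.-1 * n.-1) := (1%:M : 'M[R]_n.-1) *t B.
Definition Bqy : 'M[R]_(n * n.-1, n.-1 * n.-1) := B *t (1%:M : 'M[R]_n.-1).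

Definition BB : 'M[R]_(n * n, n * n.-1 + n.-1 * n) := row_mx (- Bux) (- Bvy).
Definition CC : 'M[R]_(n.-1 * n.-1, n * n.-1 + n.-1 * n) := row_mx (- Bqy^T) (Bqx^T).

Definition AN := BB^T *m BB + CC^T *m CC.
End Mats.

(* Main.v *)
Require Import Defs.
From HB Require Import structures.
From mathcomp Require Import all_boot all_order all_algebra.
From mathcomp Require Import mxtens.
From Stdlib Require Import ClassicalEpsilon.
Set Implicit Arguments. Unset Strict Implicit. Unset Printing Implicit Defensive.
Import Order.TTheory GRing.Theory Num.Theory.
Local Open Scope ring_scope.

Section Gen.
Variable R : realFieldType.

Lemma gram_diag0 m n (Z : 'M[R]_(m,n)) i : (Z *m Z^T) i i = 0 -> forall j, Z i j = 0.
Proof.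
rewrite mxE => Hs j.
have Hs' : \sum_k (Z i k * Z i k) = 0.
  by rewrite -[RHS]Hs; apply: eq_bigr => k _; rewrite mxE.
have := @psumr_eq0P _ _ predT (fun k => Z i k * Z i k) (fun k _ => sqr_ge0 (Z i k)) Hs' j isT.
by move/eqP; rewrite mulf_eq0 orbb => /eqP.
Qed.

Lemma gram_diag_ge0 m n (Z : 'M[R]_(m,n)) i : 0 <= (Z *m Z^T) i i.
Proof. rewrite mxE; apply: sumr_ge0 => k _; rewrite mxE; exact: sqr_ge0. Qed.

Lemma gram0 m n (Z : 'M[R]_(m,n)) : Z *m Z^T = 0 -> Z = 0.
Proof.
move=> H; apply/matrixP => i j; rewrite [RHS]mxE; apply: gram_diag0.
by rewrite H mxE.
Qed.

Lemma rv_gram0 k (v : 'rV[R]_k) : (v *m v^T) 0 0 = 0 -> v = 0.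
Proof.
move=> H; apply/matrixP => i j; rewrite [i]ord1 [RHS]mxE; exact: gram_diag0 H j.
Qed.

Lemma gram_unit r k (G : 'M[R]_(r,k)) : row_free G -> G *m G^T \in unitmx.
Proof.
move=> fG; rewrite -row_free_unit; apply: inj_row_free => v Hv.
have : (v *m G) *m (v *m G)^T = 0.
  by rewrite trmx_mul !mulmxA -(mulmxA v) Hv mul0mx.
move/gram0 => /eqP; rewrite (mulmx_free_eq0 _ fG); exact: eqP.
Qed.

Lemma pinv_uniq m k (A : 'M[R]_(m,k)) X Z : is_pinv A X -> is_pinv A Z -> X = Z.
Proof.
case=> h1 h2 h3 h4 [g1 g2 g3 g4].
have e1 : X = X *m X^T *m A^T by rewrite -mulmxA -trmx_mul h3 mulmxA h2.
have e2 : A^T = A^T *m Z^T *m A^T by rewrite -!trmx_mul mulmxA g1.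
have eX : X = X *m A *m Z.
  rewrite {1}e1 {1}e2 !mulmxA -(mulmxA X) -trmx_mul h3 -(mulmxA _ Z^T) -trmx_mul g3.
  by rewrite !mulmxA h2.
have f1 : Z = A^T *m Z^T *m Z by rewrite -trmx_mul g4 g2.
have f2 : A^T = A^T *m X^T *m A^T by rewrite -!trmx_mul mulmxA h1.
rewrite eX; symmetry; rewrite {1}f1 f2 -trmx_mul h4 -(mulmxA _ _ Z^T) -trmx_mul g4.
by rewrite -!mulmxA [Z *m (A *m Z)]mulmxA g2.
Qed.

Lemma pinv_fact m r k (F : 'M[R]_(m,r)) (G : 'M[R]_(r,k)) :
  F^T *m F \in unitmx -> G *m G^T \in unitmx ->
  is_pinv (F *m G) (G^T *m invmx (G *m G^T) *m invmx (F^T *m F) *m F^T).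
Proof.
move=> uF uG.
set iG := invmx (G *m G^T); set iF := invmx (F^T *m F).
have eG : G *m G^T *m iG = 1%:M by rewrite mulmxV.
have eF : iF *m (F^T *m F) = 1%:M by rewrite mulVmx.
have sG : iG^T = iG by rewrite trmx_inv trmx_mul trmxK.
have sF : iF^T = iF by rewrite trmx_inv trmx_mul trmxK.
have AX : F *m G *m (G^T *m iG *m iF *m F^T) = F *m iF *m F^T.
  by rewrite !mulmxA -(mulmxA F G) -(mulmxA F) eG mulmx1.
have XA : (G^T *m iG *m iF *m F^T) *m (F *m G) = G^T *m iG *m G.
  by rewrite !mulmxA -(mulmxA _ F^T F) -(mulmxA _ iF) eF mulmx1.
split.
- by rewrite AX !mulmxA -(mulmxA _ F^T F) -(mulmxA _ iF) eF mulmx1.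
- rewrite XA !mulmxA -(mulmxA _ G G^T) -(mulmxA _ (G *m G^T)) mulmxA.
  by rewrite -(mulmxA (G^T *m iG) (G *m G^T) iG) eG mulmx1.
- by rewrite AX !trmx_mul trmxK sF mulmxA.
- by rewrite XA !trmx_mul trmxK sG mulmxA.
Qed.

Lemma pinv_exists m k (A : 'M[R]_(m,k)) : exists X, is_pinv A X.
Proof.
have eA : col_base A *m row_base A = A by exact: mulmx_base.
have uG : row_base A *m (row_base A)^T \in unitmx.
  by apply: gram_unit; exact: row_base_free.
have uF : (col_base A)^T *m col_base A \in unitmx.
  rewrite -{2}[col_base A]trmxK; apply: gram_unit.
  by rewrite /row_free mxrank_tr; exact: col_base_full.
have := pinv_fact uF uG; rewrite eA => H; eexists; exact: H.
Qed.

Lemma pinvP m k (A : 'M[R]_(m,k)) : is_pinv A (pinv A).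
Proof. rewrite /pinv; apply: epsilon_spec; exact: pinv_exists. Qed.

Lemma pinv_eq m k (A : 'M[R]_(m,k)) X : is_pinv A X -> pinv A = X.
Proof. move=> hX; exact: pinv_uniq (pinvP A) hX. Qed.

Lemma pinv_tr m k (A : 'M[R]_(m,k)) X : is_pinv A X -> is_pinv A^T X^T.
Proof.
case=> h1 h2 h3 h4; split.
- by rewrite -!trmx_mul mulmxA h1.
- by rewrite -!trmx_mul mulmxA h2.
- by rewrite -trmx_mul trmxK h4.
- by rewrite -trmx_mul trmxK h3.
Qed.

Lemma addmE m n (A B : 'M[R]_(m,n)) i j : (A + B) i j = A i j + B i j.
Proof. by rewrite mxE. Qed.
Lemma scalemE m n a (A : 'M[R]_(m,n)) i j : (a *: A) i j = a * A i j.
Proof. by rewrite mxE. Qed.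

Lemma main_abstract p q r (B : 'M[R]_(p,q)) (C : 'M[R]_(r,q)) (c : R) :
  B *m C^T = 0 -> (B^T *m B + C^T *m C) \in unitmx -> 0 < c ->
  pinv (B *m invmx (B^T *m B + C^T *m C + c%:M) *m B^T) =
  pinv (B *m invmx (B^T *m B + C^T *m C) *m B^T) + c *: pinv (B *m B^T).
Proof.
move=> BC uAN c0.
set AN := B^T *m B + C^T *m C.
have CB : C *m B^T = 0 by rewrite -[C]trmxK -trmx_mul BC trmx0.
set M := B *m B^T.
have sM : M^T = M by rewrite /M trmx_mul trmxK.
set Y := pinv M.
have hY : is_pinv M Y := pinvP M.
have sY : Y^T = Y.
  symmetry; apply: (pinv_uniq hY); have := pinv_tr hY; by rewrite sM.
case: hY => h1 h2 h3 h4.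
have cMY : M *m Y = Y *m M by rewrite -h3 trmx_mul sM sY.
set P := M *m Y.
have sP : P^T = P by exact: h3.
have PM : P *m M = M by exact: h1.
have MP : M *m P = M by rewrite /P cMY mulmxA h1.
have PY : P *m Y = Y by rewrite /P cMY h2.
have PP : P *m P = P by rewrite /P mulmxA h1.
have PB : P *m B = B.
  have W0 : (B - P *m B) *m (B - P *m B)^T = 0.
    have -> : B - P *m B = (1%:M - P) *m B by rewrite mulmxBl mul1mx.
    by rewrite trmx_mul mulmxA -(mulmxA _ B) mulmxBl mul1mx PM subrr mul0mx.
  by move/gram0/eqP: W0; rewrite subr_eq0 => /eqP.
have BP : B^T *m P = B^T by rewrite -{1}sP -trmx_mul PB.
have eN : AN *m (B^T *m Y) = B^T.
  rewrite /AN mulmxDl -!mulmxA [C *m (B^T *m Y)]mulmxA CB mul0mx mulmx0 addr0.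
  by rewrite [B *m (B^T *m Y)]mulmxA.
have eSN : B *m invmx AN *m B^T = P.
  by rewrite -mulmxA -{1}eN mulKmx // mulmxA.
have pSN : pinv (B *m invmx AN *m B^T) = P.
  by rewrite eSN; apply: pinv_eq; split; rewrite ?PP ?sP.
set K := AN + c%:M.
have uK : K \in unitmx.
  rewrite -row_free_unit; apply: inj_row_free => v Hv.
  have eK : v *m K *m v^T = (v *m B^T) *m (v *m B^T)^T
      + (v *m C^T) *m (v *m C^T)^T + c *: (v *m v^T).
    rewrite /K /AN !mulmxDr !mulmxDl !trmx_mul !trmxK !mulmxA mul_mx_scalar.
    by rewrite scalemxAl.
  have : (v *m K *m v^T) 0 0 = 0 by rewrite Hv mul0mx mxE.
  rewrite eK !addmE scalemE => e.
  have g1 := gram_diag_ge0 (v *m B^T) 0; have g2 := gram_diag_ge0 (v *m C^T) 0.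
  have g3 := gram_diag_ge0 v 0.
  have g4 : 0 <= c * (v *m v^T) 0 0 by rewrite mulr_ge0 // ltW.
  have : c * (v *m v^T) 0 0 = 0.
    apply/eqP; rewrite eq_le g4 andbT.
    by rewrite -e lerDr addr_ge0.
  move/eqP; rewrite mulf_eq0 gt_eqF //= => /eqP; exact: rv_gram0.
set W := invmx (M + c%:M).
have uMc : M + c%:M \in unitmx.
  rewrite -row_free_unit; apply: inj_row_free => v Hv.
  have eK : v *m (M + c%:M) *m v^T = (v *m B) *m (v *m B)^T + c *: (v *m v^T).
    rewrite /M !mulmxDr !mulmxDl !trmx_mul !mulmxA mul_mx_scalar.
    by rewrite scalemxAl.
  have : (v *m (M + c%:M) *m v^T) 0 0 = 0 by rewrite Hv mul0mx mxE.
  rewrite eK !addmE scalemE => e.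
  have g1 := gram_diag_ge0 (v *m B) 0.
  have g4 : 0 <= c * (v *m v^T) 0 0 by apply: mulr_ge0; [exact: ltW | exact: gram_diag_ge0].
  have : c * (v *m v^T) 0 0 = 0.
    apply/eqP; rewrite eq_le g4 andbT.
    by rewrite -e lerDr.
  move/eqP; rewrite mulf_eq0 gt_eqF //= => /eqP; exact: rv_gram0.
have KB : K *m B^T = B^T *m (M + c%:M).
  rewrite /K /AN !mulmxDl mulmxDr -!mulmxA CB mulmx0 addr0 mul_mx_scalar.
  by rewrite mul_scalar_mx.
have eA : invmx K *m B^T = B^T *m W.
  have e : K *m (B^T *m W) = B^T by rewrite mulmxA KB -mulmxA mulmxV // mulmx1.
  by rewrite -{1}e mulKmx.
have eS : B *m invmx K *m B^T = M *m W by rewrite -mulmxA eA mulmxA.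
have PMc : P *m (M + c%:M) = (M + c%:M) *m P.
  by rewrite mulmxDr mulmxDl PM MP mul_mx_scalar mul_scalar_mx.
have PW : P *m W = W *m P.
  transitivity (W *m (M + c%:M) *m P *m W); first by rewrite (mulVmx uMc) mul1mx.
  by rewrite -(mulmxA W) -PMc mulmxA -mulmxA (mulmxV uMc) mulmx1.
have eX : P + c *: Y = (M + c%:M) *m Y by rewrite mulmxDl mul_scalar_mx.
have SX : M *m W *m (P + c *: Y) = P.
  by rewrite eX -mulmxA (mulmxA W) (mulVmx uMc) mul1mx.
have XS : (P + c *: Y) *m (M *m W) = P.
  by rewrite eX -mulmxA (mulmxA Y) -cMY PW mulmxA (mulmxV uMc) mul1mx.
rewrite eS pSN; apply: pinv_eq; split.
- by rewrite SX mulmxA PM.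
- by rewrite XS eX mulmxA PMc -mulmxA PY.
- by rewrite SX sP.
- by rewrite XS sP.
Qed.

Lemma tens11 m p : (1%:M : 'M[R]_m) *t (1%:M : 'M[R]_p) = 1%:M.
Proof.
apply/matrixP => i j.
case: (mxtens_indexP i) => i0 i1; case: (mxtens_indexP j) => j0 j1.
rewrite tensmxE !mxE (inj_eq (can_inj (@mxtens_indexK _ _))) xpair_eqE.
by case: eqP; case: eqP; rewrite /= ?mulr0 ?mul0r ?mulr1.
Qed.

Lemma BT_inj n (hn : (2 <= n)%N) (x : 'rV[R]_(n.-1)) : x *m (Bmat R n)^T = 0 -> x = 0.
Proof.
move=> Hx.
have n0 : (n%:R : R) != 0 by rewrite pnatr_eq0 -lt0n (leq_trans _ hn).
suff H : forall k (j : 'I_n.-1), (val j < k)%N -> x 0 j = 0.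
  by apply/matrixP => i j; rewrite [i]ord1 mxE (H j.+1).
elim=> [//|k IH] j; rewrite ltnS leq_eqVlt => /orP [/eqP jk | /IH //].
have lt_jn : (val j < n)%N by rewrite (leq_trans (ltn_ord j)) // leq_pred.
have := congr1 (fun M : 'rV_n => M 0 (Ordinal lt_jn)) Hx.
rewrite mxE [RHS]mxE (bigD1 j) //= big1 ?addr0.
  rewrite mxE mxE /= eqxx /= (ltn_eqF (ltnSn _)) subr0 mulr1.
  by move/eqP; rewrite mulf_eq0 (negPf n0) orbF => /eqP.
move=> j' nj'; rewrite !mxE /=.
have -> : (val j == val j') = false.
  by apply/negbTE; apply: contra nj' => /eqP/val_inj ->.
case: eqP => [e|_]; last by rewrite subrr mulr0 mulr0.
by rewrite IH ?mul0r // -jk -[val j]/(nat_of_ord j) e.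
Qed.

Lemma BC0 n : BB R n *m (CC R n)^T = 0.
Proof.
rewrite /BB /CC tr_row_mx mul_row_col /Bux /Bqy /Bvy /Bqx.
rewrite !linearN /= !trmxK !mulNmx opprK !tensmx_mul !mul1mx !mulmx1.
by rewrite addrN.
Qed.

Lemma AN_unit n (hn : (2 <= n)%N) : AN R n \in unitmx.
Proof.
set G := Bmat R n.
have uG : G^T *m G \in unitmx.
  rewrite -{2}[G]trmxK; apply: gram_unit; apply: inj_row_free; exact: BT_inj.
set Ri := G *m invmx (G^T *m G).
have eRi : G^T *m Ri = 1%:M by rewrite /Ri mulmxA mulmxV.
rewrite -row_free_unit; apply: inj_row_free => v Hv.
have e : v *m AN R n *m v^T = (v *m (BB R n)^T) *m (v *m (BB R n)^T)^T
   + (v *m (CC R n)^T) *m (v *m (CC R n)^T)^T.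
  by rewrite /AN mulmxDr mulmxDl !trmx_mul !trmxK !mulmxA.
have : (v *m AN R n *m v^T) 0 0 = 0 by rewrite Hv mul0mx mxE.
rewrite e addmE => e0.
have g1 := gram_diag_ge0 (v *m (BB R n)^T) 0; have g2 := gram_diag_ge0 (v *m (CC R n)^T) 0.
have a0 : ((v *m (BB R n)^T) *m (v *m (BB R n)^T)^T) 0 0 = 0.
  by apply/eqP; rewrite eq_le g1 andbT -e0 lerDl.
have b0 : ((v *m (CC R n)^T) *m (v *m (CC R n)^T)^T) 0 0 = 0.
  by apply/eqP; rewrite eq_le g2 andbT -e0 lerDr.
move: (rv_gram0 a0) (rv_gram0 b0).
rewrite -(hsubmxK v); set u := lsubmx v; set w := rsubmx v.
rewrite /BB /CC !tr_row_mx !mul_row_col /Bux /Bqy /Bvy /Bqx.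
rewrite !linearN /= !trmxK !trmx_tens !trmx1.
rewrite -/G => h1 h2.
set a := u *m (1%:M *t G^T); set b := u *m (G *t 1%:M).
have ea : a = - (w *m (G^T *t 1%:M)).
  by move/eqP: h1; rewrite subr_eq0 eqr_oppLR => /eqP.
have eb : b = w *m (1%:M *t G).
  by move/eqP: h2; rewrite addrC subr_eq0 => /eqP /esym.
have s0 : a *m (1%:M *t G) + b *m (G^T *t 1%:M) = 0.
  by rewrite {1}ea eb mulNmx -!mulmxA !tensmx_mul !mul1mx !mulmx1 addNr.
have s1 : (a *m (1%:M *t G) + b *m (G^T *t 1%:M)) *m u^T = a *m a^T + b *m b^T.
  by rewrite /a /b mulmxDl !trmx_mul !trmx_tens !trmx1 !trmxK !mulmxA.
have : (a *m a^T + b *m b^T) 0 0 = 0 by rewrite -s1 s0 mul0mx mxE.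
rewrite addmE => e1.
have ga := gram_diag_ge0 a 0; have gb := gram_diag_ge0 b 0.
have a00 : (a *m a^T) 0 0 = 0.
  by apply/eqP; rewrite eq_le ga andbT -e1 lerDl.
have a_0 := rv_gram0 a00.
have inv1 : (1%:M *t G^T) *m (1%:M *t Ri) = 1%:M :> 'M_(n * n.-1).
  by rewrite tensmx_mul mul1mx eRi tens11.
have u0 : u = 0 by rewrite -[u]mulmx1 -inv1 mulmxA -/a a_0 mul0mx.
have inv2 : (G^T *t 1%:M) *m (Ri *t 1%:M) = 1%:M :> 'M_(n.-1 * n).
  by rewrite tensmx_mul mul1mx eRi tens11.
have w1 : w *m (G^T *t 1%:M) = 0 by apply/eqP; rewrite -oppr_eq0 -ea a_0.
have w0 : w = 0 by rewrite -[w]mulmx1 -inv2 mulmxA w1 mul0mx.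
by rewrite u0 w0 row_mx0.
Qed.
End Gen.

Theorem mainTheorem10 (R : realFieldType) (n : nat) (hn : (2 <= n)%N) :
  let h : R := 1 / n%:R in
  let A := AN R n + (2 / h ^+ 2)%:M in
  let S := BB R n *m invmx A *m (BB R n)^T in
  let SN := BB R n *m invmx (AN R n) *m (BB R n)^T in
  pinv S = pinv SN + (2 / h ^+ 2) *: pinv (BB R n *m (BB R n)^T).
Proof.
move=> h A S SN.
have c0 : 0 < 2 / h ^+ 2.
  apply: divr_gt0 => //; apply: exprn_gt0; apply: divr_gt0 => //.
  by rewrite ltr0n (leq_trans _ hn).
exact: (main_abstract (BC0 R n) (AN_unit R hn) c0).
Qed.
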